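(* Let $k\ge1$, let $r\in\mathbb{Z}_k^*$ (represented by an integer $1\le r<k$ when used as an exponent), let $\varphi:\mathbb{Z}_k\to\mathbb{Z}_k$, $x\mapsto xr$, be the corresponding automorphism of the additive group $\mathbb{Z}_k$, let $m$ be the multiplicative order of $r$ in $\mathbb{Z}_k$, and let $n$ be a positive multiple of $m$. Then the extended power functions $\Pi:\mathbb{Z}_k\to\mathbb{Z}_n$ of $\varphi$ are exactly the functions \[ \Pi_{r,s,t}(x)\equiv1+ms\sum_{i=1}^{x}t^{i-1}\pmod n,\qquad x\in\mathbb{Z}_k\ (\text{represented by } 0\le x<k), \] where $s\in\mathbb{Z}_{n/m}$ and $t\in\mathbb{Z}_{n/m}^*$ satisfy: (a) $t^{r-1}\equiv1\pmod{n/m}$; (b) $s\sum_{i=1}^{k}t^{i-1}\equiv0\pmod{n/m}$; (c) $s\sum_{i=1}^{m}\big(\sum_{j=1}^{r}t^{j-1}\big)^{i-1}\equiv t-1\pmod{n/m}$. Moreover, for fixed $r$, $\Pi_{r,s,t}=\Pi_{r,s',t'}$ if and only if $s\equiv s'\pmod{n/m}$ and $s(t-t')\equiv0\pmod{n/m}$.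
   Context: A skew-morphism of a finite group $A$ is a permutation $\varphi$ of $A$ fixing the identity for which there is $\pi:A\to\mathbb{Z}_m$ ($m$ the order of $\varphi$) with $\varphi(xy)=\varphi(x)\varphi^{\pi(x)}(y)$; for an automorphism, $\pi\equiv1\pmod m$. For a positive multiple $n$ of $m$, $\Pi:A\to\mathbb{Z}_n$ is an extended power function of $\varphi$ if (i) $\Pi(x)\equiv\pi(x)\pmod m$ for all $x$; (ii) $\Pi$ of the identity is $\equiv1\pmod n$; (iii) $\Pi(xy)\equiv\sum_{i=1}^{\Pi(x)}\Pi(\varphi^{i-1}(y))\pmod n$ for all $x,y\in A$ (here $A=\mathbb{Z}_k$ is written additively, so $xy$ means $x+y$). *)

(* Defs.v *)
From mathcomp Require Import all_boot.
Unset Printing Implicit Defensive.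

Definition phi (k r : nat) (y : nat) : nat := (y * r) %% k.

Definition at_ (k n : nat) (P : 'I_k -> 'I_n) (x : nat) : nat :=
  if (insub (x %% k) : option (ordinal k)) is Some i then val (P i) else 0.

(* Extended power function Pi : Z_k -> Z_n of the automorphism phi (of order m);
   the power function of an automorphism is pi = 1 (mod m).
   (iii): Pi(x+y) = sum_{i=1}^{Pi(x)} Pi(phi^{i-1}(y))  (mod n),
   with Pi(x) represented in [0, n). *)
Definition ext_power_fun (k r m n : nat) (P : 'I_k -> 'I_n) : Prop :=
  [/\ forall x : 'I_k, val (P x) = 1 %[mod m],
      at_ k n P 0 = 1 %[mod n] &
      forall x y : 'I_k,
        at_ k n P (x + y) = \sum_(0 <= i < val (P x)) at_ k n P (iter i (phi k r) y) %[mod n] ].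

Definition Pi_rst (m n s t x : nat) : nat :=
  (1 + m * s * \sum_(i < x) t ^ i) %% n.

Definition admissible (k r m q s t : nat) : Prop :=
  s < q /\ t < q /\ coprime t q /\
  t ^ r.-1 = 1 %[mod q] /\
  s * (\sum_(i < k) t ^ i) = 0 %[mod q] /\
  s * (\sum_(i < m) (\sum_(j < r) t ^ j) ^ i) + 1 = t %[mod q].

(* Main.v *)
Require Import Defs.
From mathcomp Require Import all_boot all_algebra ring.
Set Implicit Arguments. Unset Strict Implicit. Unset Printing Implicit Defensive.
Import GRing.Theory.

Section RingFacts.
Variable R : comPzRingType.
Local Open Scope ring_scope.
Definition sig (T : R) (a : nat) := \sum_(i < a) T ^+ i.

Lemma sig0 T : sig T 0 = 0. Proof. by rewrite /sig big_ord0. Qed.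
Lemma sigS T a : sig T a.+1 = 1 + T * sig T a.
Proof. by rewrite /sig big_ord_recl expr0 mulr_sumr; congr (_ + _); apply: eq_bigr => i _; rewrite exprS. Qed.
Lemma sigSr T a : sig T a.+1 = sig T a + T ^+ a.
Proof. by rewrite /sig big_ord_recr. Qed.
Lemma sig1 T : sig T 1 = 1. Proof. by rewrite sigS sig0 mulr0 addr0. Qed.
Lemma sigD T a b : sig T (a + b) = sig T a + T ^+ a * sig T b.
Proof.
elim: b => [|b IH]; first by rewrite addn0 sig0 mulr0 addr0.
by rewrite addnS !sigSr IH mulrDr addrA exprD.
Qed.
Lemma geo T a : T ^+ a = 1 + (T - 1) * sig T a.
Proof. by rewrite /sig -subrX1 addrC subrK. Qed.

Lemma sTpow (s T : R) r : s * T ^+ r = s * T -> forall z, s * T ^+ (r * z) = s * T ^+ z.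
Proof.
move=> h; elim=> [|z IH]; first by rewrite muln0.
by rewrite mulnSr exprD mulrA IH -mulrA mulrCA h mulrCA -exprSr.
Qed.

Lemma sig_mulr (s T : R) r : s * T ^+ r = s * T -> forall z, s * sig T (r * z) = sig T r * (s * sig T z).
Proof.
move=> h; elim=> [|z IH]; first by rewrite muln0 !sig0 !mulr0.
rewrite mulnSr sigD mulrDr IH mulrA (mulrA s) (sTpow h) sigSr.
rewrite !mulrDr; congr (_ + _); first by rewrite mulrA.
by rewrite mulrC mulrA.
Qed.

Lemma sig_mulrX (s T : R) r : s * T ^+ r = s * T -> forall z i, s * sig T (z * r ^ i) = (sig T r) ^+ i * (s * sig T z).
Proof.
move=> h z; elim=> [|i IH]; first by rewrite expn0 muln1 expr0 mul1r.
by rewrite expnS mulnCA (sig_mulr h) IH exprS mulrA.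
Qed.
End RingFacts.

Lemma modZ N a b : 1 < N -> (a = b %[mod N]) <-> ((a%:R : 'Z_N) = b%:R)%R.
Proof.
move=> hN; split => [h|h]; first by apply: val_inj; rewrite /= !val_Zp_nat.
by move: (congr1 val h); rewrite /= !val_Zp_nat.
Qed.

Lemma modM_cancel m q a b : 0 < m -> (m * a = m * b %[mod m * q]) <-> (a = b %[mod q]).
Proof.
move=> hm; rewrite -!muln_modr; split => [/eqP|->//].
by rewrite eqn_pmul2l // => /eqP.
Qed.

Lemma sum_shift (G : nat -> nat) m a : (forall i, G (i + m) = G i) ->
  \sum_(i < m) G (a + i) = \sum_(i < m) G i.
Proof.
move=> hG; elim: a => [|a IH]; first by [].
rewrite -IH; case: m hG {IH} => [|m'] hG; first by rewrite !big_ord0.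
rewrite big_ord_recr big_ord_recl /= addnC; congr (_ + _).
  by rewrite addn0 addSnnS hG.
by apply: eq_bigr => i _; rewrite /bump /= add1n addnS addSn.
Qed.

Lemma sum_per (G : nat -> nat) m a : (forall i, G (i + m) = G i) ->
  \sum_(i < a + m) G i = \sum_(i < a) G i + \sum_(i < m) G i.
Proof.
move=> hG; rewrite big_split_ord /=; congr (_ + _).
exact: (sum_shift a hG).
Qed.

Lemma sum_perj (G : nat -> nat) m a j : (forall i, G (i + m) = G i) ->
  \sum_(i < a + m * j) G i = \sum_(i < a) G i + j * \sum_(i < m) G i.
Proof.
move=> hG; elim: j => [|j IH]; first by rewrite muln0 addn0 mul0n addn0.
rewrite mulnS addnCA addnC sum_per // addnC IH.
by rewrite mulSn addnCA.
Qed.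

Lemma sum_divm (G : nat -> nat) m : 0 < m -> (forall i, G i = 1 %[mod m]) -> m %| \sum_(i < m) G i.
Proof.
move=> hm hG; case: (ltngtP m 1) => [|hm1|->]; [by rewrite ltnNge hm| |by rewrite dvd1n].
have -> : \sum_(i < m) G i = \sum_(i < m) (G i %/ m * m) + \sum_(i < m) 1.
  rewrite -big_split /=; apply: eq_bigr => i _.
  by rewrite {1}(divn_eq (G i) m) hG modn_small.
by rewrite -big_distrl /= sum_nat_const card_ord muln1 dvdn_add // dvdn_mull.
Qed.

Section Main.
Variables k r m n : nat.
Hypotheses (hk : 0 < k) (hr : 0 < r <= k) (hm : 0 < m) (hrm : r ^ m = 1 %[mod k])
  (hn : 0 < n) (hmn : m %| n).

Let q := n %/ m.
Lemma hnq : n = m * q. Proof. by rewrite /q mulnC divnK. Qed.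
Lemma hq : 0 < q.
Proof. by move: hn; rewrite hnq muln_gt0 => /andP[]. Qed.

Lemma wrap1 z : z = 1 %[mod m] -> z + n = 1 + m * ((z + n - 1) %/ m).
Proof.
move=> hz; have hd : m %| z + n - 1.
  rewrite /dvdn; case: (ltngtP m 1) => [|hm1|->]; [by rewrite ltnNge hm| |by rewrite modn1].
  have hz1 : z %% m = 1 by rewrite hz modn_small.
  have -> : z + n - 1 = z %/ m * m + m * q.
    by rewrite {1}(divn_eq z m) hz1 hnq addnAC addnK.
  by rewrite [m * q]mulnC -mulnDl modnMl.
rewrite mulnC divnK // subnKC //.
by rewrite addn_gt0 hn orbT.
Qed.

Lemma cast_sig (N t z : nat) : ((\sum_(i < z) t ^ i)%:R : 'Z_N)%R = sig (t%:R : 'Z_N) z.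
Proof. by rewrite natr_sum; apply: eq_bigr => i _; rewrite natrX. Qed.

Variable P : 'I_k -> 'I_n.
Notation F := (at_ k n P).

Lemma at_mod x : F (x %% k) = F x. Proof. by rewrite /at_ modn_mod. Qed.
Lemma at_ord (i : 'I_k) : F i = val (P i).
Proof. by rewrite /at_ (modn_small (ltn_ord i)) valK. Qed.
Lemma at_val x : F x = val (P (Ordinal (ltn_pmod x hk))).
Proof. by rewrite -at_mod -at_ord. Qed.
Lemma at_lt x : F x < n. Proof. rewrite at_val; exact: ltn_ord. Qed.
Lemma iter_phi i y : iter i (phi k r) y %% k = (y * r ^ i) %% k.
Proof.
elim: i => [|i IH]; first by rewrite expn0 muln1.
by rewrite iterS /phi modn_mod -modnMml IH modnMml expnSr mulnA.
Qed.
Lemma at_iter i y : F (iter i (phi k r) y) = F (y * r ^ i).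
Proof. by rewrite -at_mod iter_phi at_mod. Qed.
Lemma at_per z : F (z * r ^ m) = F z.
Proof. by rewrite -at_mod -modnMmr hrm modnMmr muln1 at_mod. Qed.

Lemma iii_nat : ext_power_fun k r m n P ->
  forall x y, F (x + y) = \sum_(i < F x) F (y * r ^ i) %[mod n].
Proof.
case=> _ _ h3 x y.
have := h3 (Ordinal (ltn_pmod x hk)) (Ordinal (ltn_pmod y hk)).
have e1 : F (x %% k + y %% k) = F (x + y) by rewrite -at_mod modnDm at_mod.
rewrite /= e1 -at_val => ->.
rewrite big_mkord; congr (_ %% n); apply: eq_bigr => i _.
by rewrite at_iter -at_mod modnMml at_mod.
Qed.

Lemma sum_wrap (G : nat -> nat) N : (forall i, G (i + m) = G i) -> (forall i, G i = 1 %[mod m]) ->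
  \sum_(i < N + n) G i = \sum_(i < N) G i %[mod n].
Proof.
move=> hG h1; have := sum_perj N q hG; rewrite -hnq => ->.
have [c ->] : exists c, \sum_(i < m) G i = c * m by apply/dvdnP; apply: sum_divm.
by rewrite mulnCA (mulnC q m) -hnq addnC modnMDl.
Qed.

Lemma toZq a b : 1 < q -> m * a = m * b %[mod n] -> ((a%:R : 'Z_q) = b%:R)%R.
Proof. by move=> hq2 h; apply/modZ => //; apply/(modM_cancel _ _ _ hm); rewrite -hnq. Qed.
Lemma fromZq a b : 1 < q -> ((a%:R : 'Z_q) = b%:R)%R -> m * a = m * b %[mod n].
Proof. by move=> hq2 /(modZ _ _ hq2) h; rewrite hnq; apply/(modM_cancel _ _ _ hm). Qed.

Section Fwd.
Hypothesis hext : ext_power_fun k r m n P.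
Hypothesis hq2 : 1 < q.
Lemma hn2 : 1 < n.
Proof. by rewrite hnq; apply: (leq_trans hq2); rewrite leq_pmull. Qed.

Let g z := (F z + n - 1) %/ m.
Lemma F1 z : F z = 1 %[mod m].
Proof. by case: hext => h1 _ _; rewrite at_val h1. Qed.
Lemma Hg z : F z + n = 1 + m * g z.
Proof. exact: wrap1 (F1 z). Qed.
Lemma gper z : g (z * r ^ m) = g z. Proof. by rewrite /g at_per. Qed.
Lemma gmod z : g (z %% k) = g z. Proof. by rewrite /g at_mod. Qed.
Lemma FZn z : ((F z)%:R : 'Z_n)%R = (1 + ((m * g z)%N)%:R)%R.
Proof.
have := congr1 (fun a => (a%:R : 'Z_n)%R) (Hg z).
by rewrite /= natrD pchar_Zp ?hn2 // addr0 => ->; rewrite natrD.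
Qed.

Local Open Scope ring_scope.
Lemma KEY x y : ((g (x + y))%:R : 'Z_q) =
   (g x)%:R + (g y)%:R + (g x)%:R * \sum_(i < m) (g (y * r ^ i))%:R.
Proof.
set G := fun i => F (y * r ^ i).
have hG : forall i, G (i + m)%N = G i by move=> i; rewrite /G expnD mulnA at_per.
have hG1 : forall i, G i = 1 %[mod m] by move=> i; apply: F1.
have h := iii_nat hext x y.
have h2 : (\sum_(i < F x) G i = \sum_(i < 1 + m * g x) G i %[mod n])%N.
  by rewrite -Hg sum_wrap.
rewrite h2 sum_perj // big_ord1 /G expn0 muln1 in h.
move/(modZ _ _ hn2): h.
rewrite natrD natrM natr_sum.
under eq_bigr => i _ do rewrite FZn natrM.
rewrite big_split /= sumr_const card_ord -mulr_sumr !FZn !natrM => h.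
have e : ((g (x + y))%:R : 'Z_q) = ((g x + g y + g x * \sum_(i < m) g (y * r ^ i))%N)%:R.
  apply: toZq => //; apply/(modZ _ _ hn2); rewrite !natrM !natrD natrM natr_sum.
  apply: (addrI 1); rewrite h; ring.
by rewrite e !natrD natrM natr_sum.
Qed.

Let s := (g 1 %% q)%N.
Let t := ((1 + \sum_(i < m) g (r ^ i)) %% q)%N.
Notation S := (s%:R : 'Z_q).
Notation T := (t%:R : 'Z_q).
Notation ga z := ((g z)%:R : 'Z_q).

Lemma hS : S = ga 1. Proof. by rewrite Zp_nat_mod. Qed.
Lemma hT : T = 1 + \sum_(i < m) ga (r ^ i).
Proof. by rewrite Zp_nat_mod // natrD natr_sum. Qed.
Lemma Delta1 : \sum_(i < m) ga (1 * r ^ i) = T - 1.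
Proof. under eq_bigr do rewrite mul1n. by rewrite hT [1 + _]addrC addrK. Qed.

Lemma g0 : ga 0 = 0.
Proof.
case: hext => _ h0 _.
have e1 := FZn 0.
move/(modZ _ _ hn2): h0; rewrite e1 mulr1n -[X in _ = X]addr0 => /addrI e2.
have : ((g 0)%:R : 'Z_q) = (0%N)%:R.
  by apply: toZq => //; apply/(modZ _ _ hn2); rewrite e2 muln0.
by [].
Qed.

Lemma gsig z : ga z = S * sig T z.
Proof.
elim: z => [|z IH]; first by rewrite g0 sig0 mulr0.
rewrite -[z.+1]addn1 KEY Delta1 -hS IH addn1 sigS; ring.
Qed.

Lemma hb : S * sig T k = 0.
Proof. by rewrite -gsig -gmod modnn g0. Qed.

Lemma Tk : T ^+ k = 1.
Proof.
rewrite geo -Delta1; under eq_bigr do rewrite gsig.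
rewrite mulr_suml big1 ?addr0 // => i _.
by rewrite mulrAC hb mul0r.
Qed.

Lemma Tunit : T \is a GRing.unit.
Proof. by rewrite -(unitrX_pos _ hk) Tk unitr1. Qed.

Lemma Deltar : \sum_(i < m) ga (r * r ^ i) = T - 1.
Proof.
have hGp : forall i, g (r ^ (i + m)) = g (r ^ i) by move=> i; rewrite expnD gper.
have e : (\sum_(i < m) g (r * r ^ i))%N = (\sum_(i < m) g (r ^ i))%N.
  rewrite -(sum_shift 1 hGp); apply: eq_bigr => i _; by rewrite expnS.
by rewrite -natr_sum e natr_sum hT [1 + _]addrC addrK.
Qed.

Lemma er : r = r.-1.+1.
Proof. by case/andP: hr => h _; rewrite prednK. Qed.

Lemma sTr : S * T ^+ r = S * T.
Proof.
have E := KEY 1 r.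
rewrite Deltar -hS !gsig add1n sigS in E.
move: E; rewrite [in sig T r]er sigS => E.
have h0 : T * (S * ((T - 1) * sig T r.-1)) = T * 0.
  rewrite mulr0.
  have -> : T * (S * ((T - 1) * sig T r.-1)) =
     S * (1 + T * (1 + T * sig T r.-1)) - (S + S * (1 + T * sig T r.-1) + S * (T - 1)) by ring.
  by rewrite E subrr.
move/(mulrI Tunit): h0 => h1.
rewrite er exprSr (geo T r.-1).
have -> : S * ((1 + (T - 1) * sig T r.-1) * T) = S * T + (S * ((T - 1) * sig T r.-1)) * T by ring.
by rewrite h1 mul0r addr0.
Qed.

Lemma gpow i : ga (r ^ i) = (sig T r) ^+ i * S.
Proof.
have := sig_mulrX sTr 1 i.
by rewrite sig1 mulr1 mul1n -gsig.
Qed.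

Lemma hc : S * \sum_(i < m) (sig T r) ^+ i + 1 = T.
Proof.
rewrite [in RHS]hT addrC; congr (_ + _); rewrite mulr_sumr; apply: eq_bigr => i _.
by rewrite gpow mulrC.
Qed.

Lemma ha : T ^+ r.-1 = 1.
Proof.
have e1 : (sig T r) ^+ m * S = S.
  by rewrite -gpow -(mul1n (r ^ m)%N) gper hS.
set U := sig T r.
have hU : U = 1 + T * sig T r.-1 by rewrite /U [in sig T r]er sigS.
have e2 : T * (sig T r.-1 * (S * \sum_(i < m) U ^+ i)) = T * 0.
  rewrite mulr0.
  have -> : T * (sig T r.-1 * (S * \sum_(i < m) U ^+ i)) = S * ((U - 1) * \sum_(i < m) U ^+ i).
    by rewrite hU; ring.
  by rewrite -subrX1 mulrBr mulrC e1 mulr1 subrr.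
move/(mulrI Tunit): e2.
have -> : S * \sum_(i < m) U ^+ i = T - 1 by rewrite -hc addrK.
by move=> e3; rewrite geo mulrC e3 addr0.
Qed.

Lemma fwd : exists s t, admissible k r m q s t /\ forall x : 'I_k, val (P x) = Pi_rst m n s t x.
Proof.
exists s, t; split.
  split; first exact: ltn_pmod hq.
  split; first exact: ltn_pmod hq.
  split; first by rewrite coprime_sym -unitZpE // Tunit.
  split; first by apply/(modZ _ _ hq2); rewrite natrX ha.
  split; first by apply/(modZ _ _ hq2); rewrite natrM cast_sig hb.
  apply/(modZ _ _ hq2); rewrite natrD natrM natr_sum.
  under eq_bigr do rewrite natrX cast_sig.
  by rewrite hc.
move=> x; rewrite -at_ord -(modn_small (at_lt x)) /Pi_rst.
rewrite -modnDr Hg -mulnA; apply/eqP; rewrite eqn_modDl; apply/eqP.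
by apply: fromZq => //; rewrite natrM cast_sig gsig.
Qed.
End Fwd.

Section Bwd.
Variables s t : nat.
Hypothesis hadm : admissible k r m q s t.
Hypothesis hP : forall x : 'I_k, val (P x) = Pi_rst m n s t x.
Hypothesis hq2 : 1 < q.
Let hn2 : 1 < n. Proof. by rewrite hnq; apply: (leq_trans hq2); rewrite leq_pmull. Qed.

Local Open Scope ring_scope.
Notation S := (s%:R : 'Z_q).
Notation T := (t%:R : 'Z_q).
Notation Sn z := (\sum_(i < z) t ^ i)%N.

Lemma FPi z : F z = Pi_rst m n s t (z %% k).
Proof. by rewrite at_val hP. Qed.

Lemma bT : S * T ^+ r = S * T.
Proof.
case: hadm => _ [_ [_ [ha _]]].
move/(modZ _ _ hq2): ha; rewrite natrX mulr1n => ha.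
by rewrite er exprS ha mulr1.
Qed.
Lemma bb : S * sig T k = 0.
Proof.
case: hadm => _ [_ [_ [_ [hb _]]]].
by move/(modZ _ _ hq2): hb; rewrite natrM cast_sig.
Qed.
Lemma bc : S * \sum_(i < m) (sig T r) ^+ i + 1 = T.
Proof.
case: hadm => _ [_ [_ [_ [_ hc]]]].
move/(modZ _ _ hq2): hc; rewrite natrD natrM natr_sum.
by under eq_bigr do rewrite natrX cast_sig.
Qed.

Lemma Ssigk j : S * sig T (j * k) = 0.
Proof.
elim: j => [|j IH]; first by rewrite mul0n sig0 mulr0.
by rewrite mulSn addnC sigD mulrDr IH mulrCA bb mulr0 addr0.
Qed.
Lemma sig_per z : S * sig T (z %% k) = S * sig T z.
Proof.
by rewrite [in RHS](divn_eq z k) addnC sigD mulrDr mulrCA Ssigk mulr0 addr0.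
Qed.

Lemma FZ z : (F z = 1 + m * (s * Sn z) %[mod n])%N.
Proof.
rewrite FPi /Pi_rst modn_mod -mulnA; apply/eqP; rewrite eqn_modDl; apply/eqP.
by apply: fromZq => //; rewrite !natrM !cast_sig sig_per.
Qed.
Lemma bF1 z : (F z = 1 %[mod m])%N.
Proof. by rewrite FPi /Pi_rst modn_dvdm // -mulnA addnC mulnC modnMDl. Qed.
Lemma bFZn z : ((F z)%:R : 'Z_n) = 1 + ((m * (s * Sn z))%N)%:R.
Proof. by move/(modZ _ _ hn2): (FZ z); rewrite natrD. Qed.

Lemma biii x y : (F (x + y) = \sum_(i < F x) F (y * r ^ i) %[mod n])%N.
Proof.
set G := fun i => F (y * r ^ i).
have hG : forall i, G (i + m)%N = G i by move=> i; rewrite /G expnD mulnA at_per.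
have hG1 : forall i, (G i = 1 %[mod m])%N by move=> i; apply: bF1.
set b := ((F x + n - 1) %/ m)%N.
have hb : (F x + n = 1 + m * b)%N by apply: wrap1; apply: bF1.
rewrite -(sum_wrap (F x) hG hG1) hb sum_perj // big_ord1 /G expn0 muln1.
have hbeta : (b%:R : 'Z_q) = S * sig T x.
  rewrite -cast_sig -natrM; apply: toZq => //.
  apply/eqP; rewrite -(eqn_modDl 1) -hb -FZ modnDr //.
set Y := (s * Sn y + b + b * \sum_(i < m) (s * Sn (y * r ^ i)))%N.
have e : (((m * (s * Sn (x + y)))%N)%:R : 'Z_n) = ((m * Y)%N)%:R.
  apply/(modZ _ _ hn2); apply: fromZq => //.
  rewrite /Y !natrD !natrM !cast_sig natr_sum hbeta.
  under eq_bigr do rewrite natrM cast_sig (sig_mulrX bT).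
  rewrite -mulr_suml sigD geo.
  have hT1 : T - 1 = S * \sum_(i < m) (sig T r) ^+ i by rewrite -[X in X - 1]bc addrK.
  rewrite hT1; ring.
apply/(modZ _ _ hn2); rewrite bFZn e [in RHS]natrD [in RHS]natrM [in RHS]natr_sum bFZn.
under eq_bigr do rewrite bFZn.
rewrite big_split /= sumr_const card_ord -natr_sum -big_distrr /= /Y !natrM !natrD !natrM.
ring.
Qed.

Lemma bwd : ext_power_fun k r m n P.
Proof.
split.
- by move=> x; rewrite -at_ord bF1.
- by rewrite FZ big_ord0 !muln0 addn0.
- move=> x y; rewrite big_mkord -at_ord.
  have e : forall i, F (iter i (phi k r) y) = F (y * r ^ i) by move=> i; rewrite at_iter.
  under eq_bigr do rewrite e.
  exact: biii.
Qed.
End Bwd.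

Local Open Scope ring_scope.
Lemma PiE (s t s' t' : nat) (hq2 : (1 < q)%N) (x : nat) :
  Pi_rst m n s t x = Pi_rst m n s' t' x <->
  (s%:R : 'Z_q) * sig (t%:R) x = (s'%:R : 'Z_q) * sig (t'%:R) x.
Proof.
rewrite /Pi_rst -!mulnA; split.
  move/eqP; rewrite eqn_modDl => /eqP /toZq -/(_ hq2).
  by rewrite !natrM !cast_sig.
move=> h; apply/eqP; rewrite eqn_modDl; apply/eqP; apply: fromZq => //.
by rewrite !natrM !cast_sig.
Qed.

Lemma sTi (S T T' : 'Z_q) i : S * T = S * T' -> S * T ^+ i = S * T' ^+ i.
Proof.
move=> h; elim: i => [|i IH]; first by rewrite !expr0.
by rewrite !exprSr !mulrA IH -!mulrA [T'^+i * T]mulrC [T'^+i * T']mulrC !mulrA h.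
Qed.

Lemma part2 (hq2 : (1 < q)%N) (hrk : coprime r k)
  (hmin : forall j, (0 < j < m)%N -> (r ^ j != 1 %[mod k])%N) (s t s' t' : nat) :
  admissible k r m q s t -> admissible k r m q s' t' ->
  ((forall x : 'I_k, Pi_rst m n s t x = Pi_rst m n s' t' x) <->
   (s = s' %[mod q] /\ s * t = s * t' %[mod q])%N).
Proof.
move=> had had'.
have ceq a b : ((a%:R : 'Z_q) = b%:R) -> (a = b %[mod q])%N by move/(modZ _ _ hq2).
split; last first.
  case=> /(modZ _ _ hq2) h1 /(modZ _ _ hq2); rewrite !natrM => h2 x.
  apply/(PiE _ _ _ _ hq2); rewrite -h1 /sig !mulr_sumr; apply: eq_bigr => i _.
  exact: sTi.
move=> h.
have hb := bb had hq2; have hb' := bb had' hq2.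
have hc := bc had hq2; have hc' := bc had' hq2.
case: (ltngtP k 2) => hk2.
-
  have ek : k = 1%N by apply/eqP; rewrite eqn_leq -ltnS hk2 hk.
  move: hb hb'; rewrite ek !sig1 !mulr1 => hb hb'.
  split; apply: ceq; rewrite ?natrM hb ?hb' //.
  by rewrite !mul0r.
-
  have e1 := h (Ordinal (ltn_trans (ltnSn 1) hk2)).
  have e2 := h (Ordinal hk2).
  have s2 : forall T : 'Z_q, sig T 2 = 1 + T by move=> T; rewrite sigS sig1 mulr1.
  move/(PiE _ _ _ _ hq2): e1; rewrite /= !sig1 !mulr1 => e1.
  move/(PiE _ _ _ _ hq2): e2; rewrite /= !s2 e1 !mulrDr !mulr1 => e2.
  have {e2} e2 := addrI _ e2.
  by split; apply: ceq; [exact: e1 | rewrite !natrM e1 e2].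
-
  have er1 : r = 1%N.
    case/andP: hr; rewrite hk2 => r0 r2.
    case: (ltngtP r 1) r0 r2 hrk => // hr1 _ r2.
    have e : r = 2%N by apply/eqP; rewrite eqn_leq r2 hr1.
    by rewrite e hk2.
  have em : m = 1%N.
    case: (ltngtP m 1) hm => // hm1 _.
    by have := hmin 1%N; rewrite hm1 er1 /= => /(_ isT); rewrite expn1 eqxx.
  move: hc hc'; rewrite em er1 !big_ord1 !expr0 !mulr1 => hc hc'.
  have h1k : (1 < k)%N by rewrite hk2.
  have e1 := h (Ordinal h1k).
  move/(PiE _ _ _ _ hq2): e1; rewrite /= !sig1 !mulr1 => e1.
  split; apply: ceq; rewrite ?natrM //.
  by rewrite -hc -hc' e1.
Qed.
Local Close Scope ring_scope.

Section Q1.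
Hypothesis hq1 : q = 1%N.
Lemma nm : n = m. Proof. by rewrite hnq hq1 muln1. Qed.
Lemma Pi1 s t x : Pi_rst m n s t x = 1 %% n.
Proof. by rewrite /Pi_rst nm -mulnA addnC mulnC modnMDl. Qed.
Lemma adm1 : admissible k r m q 0 0.
Proof. by rewrite /admissible hq1 !modn1. Qed.
Lemma fwd1 : ext_power_fun k r m n P ->
  exists s t, admissible k r m q s t /\ forall x : 'I_k, val (P x) = Pi_rst m n s t x.
Proof.
case=> h1 _ _; exists 0, 0; split; first exact: adm1.
move=> x; have hlt : val (P x) < m by rewrite -nm; exact: ltn_ord.
rewrite Pi1; have -> : 1 %% n = 1 %% m by rewrite nm.
by rewrite -(h1 x) modn_small.
Qed.
Lemma bwd1 s t : (forall x : 'I_k, val (P x) = Pi_rst m n s t x) -> ext_power_fun k r m n P.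
Proof.
move=> hP.
have hF : forall z, F z = 1 %% n by move=> z; rewrite at_val hP Pi1.
split.
- by move=> x; rewrite -at_ord hF nm modn_mod.
- by rewrite hF modn_mod.
- move=> x y; rewrite hF big_mkord.
  under eq_bigr do rewrite hF.
  by rewrite sum_nat_const card_ord -at_ord hF modnMm muln1 modn_mod.
Qed.
Lemma part2_1 s t s' t' :
  ((forall x : 'I_k, Pi_rst m n s t x = Pi_rst m n s' t' x) <->
   (s = s' %[mod q] /\ s * t = s * t' %[mod q])).
Proof. by rewrite hq1 !modn1; split => // _ x; rewrite !Pi1. Qed.
End Q1.
End Main.

Unset Implicit Arguments.
Theorem lemma5p2 (k r m n : nat)
  (hk : 0 < k) (hr : 0 < r <= k) (hrk : coprime r k)
  (hm : 0 < m) (hrm : r ^ m = 1 %[mod k])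
  (hmin : forall j, 0 < j < m -> r ^ j != 1 %[mod k])
  (hn : 0 < n) (hmn : m %| n) :
  (forall P : 'I_k -> 'I_n,
     ext_power_fun k r m n P <->
     exists s t, admissible k r m (n %/ m) s t /\
                 forall x : 'I_k, val (P x) = Pi_rst m n s t x)
  /\
  (forall s t s' t',
     admissible k r m (n %/ m) s t -> admissible k r m (n %/ m) s' t' ->
     ((forall x : 'I_k, Pi_rst m n s t x = Pi_rst m n s' t' x) <->
      (s = s' %[mod n %/ m] /\ s * t = s * t' %[mod n %/ m]))).
Proof.
have hq0 : 0 < n %/ m by rewrite divn_gt0 // dvdn_leq.
case: (ltngtP (n %/ m) 1) => hq2.
- by move: hq0; rewrite ltnNge -ltnS hq2.
- split.
    move=> P; split; first by move=> he; exact: (fwd hk hr hm hrm hn hmn he hq2).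
    by case=> s [t [had hP]]; exact: (bwd hk hr hm hrm hn hmn had hP hq2).
  by move=> s t s' t' had had'; exact: (part2 hk hr hm hmn hq2 hrk hmin had had').
- split.
    move=> P; split; first by move=> he; exact: (fwd1 hmn hq2 he).
    by case=> s [t [_ hP]]; exact: (bwd1 r hk hmn hq2 hP).
  by move=> s t s' t' _ _; exact: (part2_1 k hmn hq2).
Qed.
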